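(* Let $n\ge 1$ and let $B\in\mathbb{R}^{n\times n}$ satisfy $B_{ij}\ge 0$ and $\sum_{j=1}^n B_{ij}\le 1$ for all $i,j\in\{1,\dots,n\}$. Let $\zeta=\frac{1}{n^2}\sum_{i=1}^n\sum_{j=1}^n \mathbb{1}(B_{ij}>0)$ and define the average repetition probability $R=\sum_{k=1}^\infty \operatorname{tr}\!\left(\frac{B^{2k}}{\zeta^k n^k}\right)$. If $\zeta n>\rho(B^2)$, then $$R=\operatorname{tr}\!\left(B^2(\zeta n I-B^2)^{-1}\right)\le \frac{\|B^2\|_*}{\sigma_n(\zeta n I-B^2)}.$$
   Context: $B$ is the sub-transition matrix of a Markov generation model over a vocabulary of $n$ words (the full transition matrix on $n+1$ states, the last being an absorbing end-of-sentence state, is $A=\begin{bmatrix}B & b\\ 0 & 1\end{bmatrix}$ with $b_i=1-\sum_{j}B_{ij}$). $\mathbb{1}(\cdot)$ is the indicator function, $\rho(\cdot)$ denotes the spectral radius, $\|\cdot\|_*$ the nuclear norm (sum of singular values), $\sigma_n(\cdot)$ the smallest singular value of an $n\times n$ matrix, and $I$ the $n\times n$ identity matrix. *)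

(* Defs.v *)
From HB Require Import structures.
From mathcomp Require Import all_boot all_order all_algebra.
From mathcomp Require Import all_classical all_reals all_analysis.
From mathcomp Require Import complex.
Set Implicit Arguments. Unset Strict Implicit. Unset Printing Implicit Defensive.
Import Order.TTheory GRing.Theory Num.Theory.
Local Open Scope ring_scope.

Section Spectral.
Variable R : realType.

Definition cmx n (A : 'M[R]_n) : 'M[R[i]]_n := map_mx (fun x => Complex x 0) A.

(* the complex eigenvalues of A, listed with algebraic multiplicity:
   the roots of the characteristic polynomial over C = R[i] *)
Definition eigvals n (A : 'M[R]_n) : seq R[i] :=
  sval (closed_field_poly_normal (char_poly (cmx A))).

Definition spectral_radius n (A : 'M[R]_n) : R :=
  \big[Num.max/0]_(z <- eigvals A) Normc.normc z.

(* singular values of A: square roots of the eigenvalues of A^T A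
   (these eigenvalues are real and nonnegative) *)
Definition singvals n (A : 'M[R]_n) : seq R :=
  [seq Num.sqrt (complex.Re z) | z <- eigvals (A^T *m A)].

Definition nuclear_norm n (A : 'M[R]_n) : R := \sum_(s <- singvals A) s.

Definition sigma_min n (A : 'M[R]_n) : R := head 0 (sort <=%R (singvals A)).

Definition zeta n (B : 'M[R]_n) : R :=
  (#|[set ij : 'I_n * 'I_n | 0 < B ij.1 ij.2]|%:R) / (n%:R ^+ 2).

Definition rep_term n (B : 'M[R]_n) (k : nat) : R :=
  \tr (B ^+ (2 * k)) / ((zeta B) ^+ k * n%:R ^+ k).

End Spectral.

(* Main.v *)
Require Import Defs.
From HB Require Import structures.
From mathcomp Require Import all_boot all_order all_algebra.
From mathcomp Require Import all_classical all_reals all_analysis.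
From mathcomp Require Import complex.
Import Order.TTheory GRing.Theory Num.Theory.
Local Open Scope ring_scope.
Local Open Scope classical_set_scope.
From mathcomp Require Import zify ring lra.
Set Implicit Arguments. Unset Strict Implicit.
Notation adjm M := (map_mx Num.conj_op (trmx M)).
Local Notation rc x := (real_complex _ x).
Lemma trig_mulmx (F : comNzRingType) (m : nat) (A B : 'M[F]_m) :
  is_trig_mx A -> is_trig_mx B -> is_trig_mx (A *m B).
Proof.
move=> /is_trig_mxP tA /is_trig_mxP tB; apply/is_trig_mxP => i j lij.
rewrite mxE big1 // => k _.
case: (ltnP i k) => [ik|ki]; first by rewrite tA // mul0r.
by rewrite tB ?mulr0 // (leq_ltn_trans ki lij).
Qed.

Lemma trig_mulmx_diag (F : comNzRingType) (m : nat) (A B : 'M[F]_m) i :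
  is_trig_mx A -> is_trig_mx B -> (A *m B) i i = A i i * B i i.
Proof.
move=> /is_trig_mxP tA /is_trig_mxP tB.
rewrite mxE (bigD1 i) //= big1 ?addr0 // => k ki.
case: (ltnP i k) => [ik|]; first by rewrite tA // mul0r.
rewrite leq_eqVlt => /orP[/eqP eki|kl]; first by move: ki; rewrite -val_eqE /= eki eqxx.
by rewrite tB ?mulr0.
Qed.

Lemma trig_exp (F : comNzRingType) (m : nat) (A : 'M[F]_m.+1) k :
  is_trig_mx A -> is_trig_mx (A ^+ k) /\ forall i, (A ^+ k) i i = A i i ^+ k.
Proof.
move=> tA; elim: k => [|k [tk dk]].
  by rewrite expr0; split=> [|i]; [exact: scalar_mx_is_trig | rewrite mxE eqxx].
rewrite exprS; split; first exact: trig_mulmx.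
by move=> i; rewrite trig_mulmx_diag // dk exprS.
Qed.

Lemma trig_inv (F : fieldType) (m : nat) (U V : 'M[F]_m) :
  is_trig_mx U -> (forall i, U i i != 0) -> V *m U = 1%:M -> is_trig_mx V.
Proof.
move=> /is_trig_mxP tU dU VU.
suff H : forall d (i j : 'I_m), (m - j <= d)%N -> (i < j)%N -> V i j = 0.
  by apply/is_trig_mxP => i j; apply: (H m); rewrite leq_subr.
elim=> [|d IH] i j hd lij.
  by move: (ltn_ord j); rewrite -subn_gt0; move: hd; rewrite leqn0 => /eqP ->.
have /matrixP/(_ i j) := VU.
rewrite !mxE (bigD1 j) //= big1.
  rewrite addr0 -val_eqE /= (ltn_eqF lij) => /eqP.
  by rewrite mulf_eq0 (negbTE (dU j)) orbF => /eqP.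
move=> k kj; case: (ltnP k j) => [kl|]; first by rewrite tU // mulr0.
rewrite leq_eqVlt => /orP[/eqP ejk|jk]; first by move: kj; rewrite -val_eqE /= ejk eqxx.
rewrite IH ?mul0r //; last exact: ltn_trans lij jk.
have := ltn_ord k; move: hd jk; clear; lia.
Qed.
Lemma char_poly_conj (F : fieldType) (m : nat) (P X : 'M[F]_m) :
  P \in unitmx -> char_poly (P *m X *m invmx P) = char_poly X.
Proof.
move=> uP; rewrite /char_poly /char_poly_mx.
set P1 := map_mx polyC P; set P2 := map_mx polyC (invmx P).
have P12 : P1 *m P2 = 1%:M by rewrite -map_mxM mulmxV // map_mx1.
have -> : 'X%:M - map_mx polyC (P *m X *m invmx P)
   = P1 *m ('X%:M - map_mx polyC X) *m P2.
  rewrite !map_mxM mulmxBr mulmxBl -/P1 -/P2; congr (_ - _).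
  by rewrite scalar_mxC -mulmxA P12 mulmx1.
rewrite !det_mulmx mulrC mulrA -det_mulmx.
have P21 : P2 *m P1 = 1%:M by rewrite -map_mxM mulVmx // map_mx1.
by rewrite P21 det1 mul1r.
Qed.
Lemma eigvals_prod (R : realType) m (X : 'M[R]_m) :
  char_poly (cmx X) = \prod_(z <- eigvals X) ('X - z%:P).
Proof.
rewrite /eigvals; case: closed_field_poly_normal => r /= hr.
by rewrite {1}hr (monicP (char_poly_monic _)) scale1r.
Qed.

Lemma eig_perm (R : realType) m (X : 'M[R]_m) (P : 'M[R[i]]_m) :
  P \in unitmx -> is_trig_mx (P *m cmx X *m invmx P) ->
  perm_eq [seq (P *m cmx X *m invmx P) i i | i <- enum 'I_m] (eigvals X).
Proof.
move=> uP tT; apply: prod_XsubC_eq.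
rewrite -eigvals_prod -(@char_poly_conj _ _ P (cmx X) uP) (char_poly_trig tT).
by rewrite big_map big_enum.
Qed.
Lemma quad_row (C : numClosedFieldType) m (Q Y : 'M[C]_m) j :
  (row j Q *m Y *m (adjm (row j Q))) 0 0 = (Q *m Y *m (adjm (Q))) j j.
Proof.
rewrite -row_mul !mxE; apply: eq_bigr => k _; rewrite !mxE; congr (_ * _).
Qed.

Lemma spec_diag (C : numClosedFieldType) m (Q : 'M[C]_m) (d : 'rV[C]_m) (G : 'M[C]_m) j :
  Q \is unitarymx -> G = invmx Q *m diag_mx d *m Q ->
  (row j Q *m G *m (adjm (row j Q))) 0 0 = d 0 j.
Proof.
move=> uQ ->; rewrite quad_row -invmx_unitary // !mulmxA mulmxV ?unitarymx_unit //.
by rewrite mul1mx mulmxK ?unitarymx_unit // mxE eqxx mulr1n.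
Qed.

Lemma spec_lower (C : numClosedFieldType) m (Q : 'M[C]_m) (d : 'rV[C]_m) (G : 'M[C]_m) (s : C) :
  Q \is unitarymx -> G = invmx Q *m diag_mx d *m Q -> (forall j, s <= d 0 j) ->
  forall u : 'rV_m, s * dotmx u u <= (u *m G *m (adjm (u))) 0 0.
Proof.
move=> uQ -> sd u.
set v := u *m (adjm (Q)).
have e1 : (u *m (invmx Q *m diag_mx d *m Q) *m (adjm (u))) 0 0
   = (v *m diag_mx d *m (adjm (v))) 0 0.
  rewrite /v invmx_unitary // !mulmxA; congr (_ _ 0 0).
  by rewrite trmx_mul map_mxM trmxCK mulmxA.
have e2 : dotmx u u = dotmx v v.
  rewrite !dotmxE /v trmx_mul map_mxM trmxCK mulmxA -(mulmxA u).
  by rewrite -invmx_unitary // mulVmx ?unitarymx_unit // mulmx1.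
rewrite e1 e2 dotmxE !mxE mulr_sumr -subr_ge0 -sumrB sumr_ge0 // => k _.
rewrite mul_mx_diag !mxE; set w := (\sum_j _ * _).
by rewrite mulrAC [s * _]mulrC -mulrBr mulr_ge0 ?subr_ge0 ?mul_conjC_ge0.
Qed.
Lemma cmxE (R : realType) m (X : 'M[R]_m) : cmx X = map_mx (real_complex R) X.
Proof. by []. Qed.

Lemma adj_cmx (R : realType) m (Y : 'M[R]_m) : adjm (cmx Y) = cmx (Y^T).
Proof. by apply/matrixP => i j; rewrite !mxE /Num.conj_op /= oppr0. Qed.

Lemma quad_cmx (R : realType) m (X : 'M[R]_m) (u : 'rV[R[i]]_m) :
  (u *m cmx (X^T *m X) *m adjm u) 0 0
  = dotmx (u *m cmx X^T) (u *m cmx X^T).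
Proof.
rewrite dotmxE trmx_mul map_mxM adj_cmx trmxK !cmxE map_mxM !mulmxA.
by [].
Qed.

Lemma spec_real (R : realType) m (X : 'M[R]_m) :
  exists Q : 'M[R[i]]_m, exists d : 'rV[R[i]]_m,
   [/\ Q \is unitarymx, cmx (X^T *m X) = invmx Q *m diag_mx d *m Q,
    perm_eq [seq d 0 i | i <- enum 'I_m] (eigvals (X^T *m X)) &
    forall j, d 0 j = dotmx (row j Q *m cmx X^T) (row j Q *m cmx X^T)].
Proof.
set G := cmx (X^T *m X).
have nG : G \is normalmx.
  have hG : adjm G = G by rewrite adj_cmx trmx_mul trmxK.
  by apply/normalmxP; rewrite hG.
have eG := orthomx_spectralP nG.
exists (spectralmx G), (spectral_diag G).
have uQ := spectral_unitarymx G.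
have cQ : spectralmx G *m G *m invmx (spectralmx G) = diag_mx (spectral_diag G).
  rewrite {2}eG !mulmxA mulmxV ?spectral_unit // mul1mx mulmxK ?spectral_unit //.
split => //.
- have := @eig_perm _ _ (X^T *m X) _ (spectral_unit G).
  rewrite cQ => /(_ (diag_mx_is_trig _)).
  by congr perm_eq; apply: eq_map => i; rewrite mxE eqxx mulr1n.
- by move=> j; rewrite -quad_cmx -/G (spec_diag _ uQ eG).
Qed.
Lemma sigma_head (R : realType) (l : seq R) : l != [::] ->
  head 0 (sort <=%R l) \in l /\ forall y, y \in l -> head 0 (sort <=%R l) <= y.
Proof.
move=> l0; have ss := sort_le_sorted l.
have ml y : (y \in sort <=%R l) = (y \in l) by rewrite mem_sort.
case E: (sort <=%R l) ss ml => [|x s] /=.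
  by move=> _ _; move: l0; rewrite -size_eq0 -(size_sort <=%R l) E.
move=> pth ml; split; first by rewrite -ml inE eqxx.
move=> y; rewrite -ml inE => /orP[/eqP->//|ys].
by have /allP := order_path_min le_trans pth; apply.
Qed.

Lemma sqrtC_rc (R : realType) (x : R) : 0 <= x -> sqrtC ((rc x)) = rc (Num.sqrt x).
Proof.
move=> x0; rewrite -{1}(sqr_sqrtr x0) rmorphXn /= sqrCK //.
by rewrite ler0c sqrtr_ge0.
Qed.

Lemma ge0_Cre (R : realType) (z : R[i]) : 0 <= z -> z = rc (complex.Re z) /\ 0 <= complex.Re z.
Proof.
move=> z0; have zr : z \is Num.real by exact: ger0_real.
have e := RRe_real zr; split; first by rewrite e.
by rewrite -ler0c e.
Qed.
Lemma singvals_spec (R : realType) k (X : 'M[R]_k.+1) (d : 'rV[R[i]]_k.+1) :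
  perm_eq [seq d 0 i | i <- enum 'I_k.+1] (eigvals (X^T *m X)) ->
  perm_eq [seq Num.sqrt (complex.Re (d 0 i)) | i <- enum 'I_k.+1] (singvals X).
Proof.
move=> pd; rewrite /singvals.
have := perm_map (fun z => Num.sqrt (complex.Re z)) pd.
by rewrite -map_comp.
Qed.

Lemma M_bound (R : realType) k (M : 'M[R]_k.+1) : M \in unitmx ->
  0 < sigma_min M /\ forall u : 'rV[R[i]]_k.+1,
  rc (sigma_min M ^+ 2) * dotmx u u <= dotmx (u *m cmx M^T) (u *m cmx M^T).
Proof.
move=> uM.
have [Q [d [uQ eG pd dd]]] := spec_real M.
have ps := singvals_spec pd.
have dge0 j : 0 <= d 0 j by rewrite dd dnorm_ge0.
have ne : singvals M != [::].
  by rewrite -size_eq0 -(perm_size ps) size_map size_enum_ord.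
have [smem sle] := sigma_head ne.
rewrite -/(sigma_min M) in smem sle.
set s := sigma_min M in smem sle *.
have sle' j : s <= Num.sqrt (complex.Re (d 0 j)).
  by apply: sle; rewrite -(perm_mem ps); apply: map_f; rewrite mem_enum.
have [j0 ej0] : exists j, s = Num.sqrt (complex.Re (d 0 j)).
  by move: smem; rewrite -(perm_mem ps) => /mapP[j _ ->]; exists j.
have s0 : 0 <= s by rewrite ej0 sqrtr_ge0.
split.
  rewrite lt_def s0 andbT; apply/eqP => es.
  have [de dp] := ge0_Cre (dge0 j0).
  move: es; rewrite ej0 => /eqP; rewrite sqrtr_eq0 => dle.
  have d0 : d 0 j0 = 0 by rewrite de (le_anti (introT andP (conj dle dp))).
  move: d0; rewrite dd => /eqP; rewrite dnorm_eq0 => /eqP w0.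
  have uMT : cmx M^T \in unitmx by rewrite cmxE map_unitmx unitmx_tr.
  have r0 : row j0 Q = 0.
    by rewrite -[row j0 Q](mulmxK uMT) w0 mul0mx.
  have := (row_unitarymxP uQ) j0 j0; rewrite r0 eqxx.
  by rewrite linear0l => /eqP; rewrite eq_sym oner_eq0.
move=> u; rewrite -quad_cmx.
apply: (spec_lower uQ eG) => j.
have [de dp] := ge0_Cre (dge0 j).
rewrite [X in _ <= X]de lecR expr2.
rewrite -(sqr_sqrtr dp) expr2.
by apply: ler_pM => //; apply: sle'.
Qed.
Lemma W_bound (R : realType) k (M : 'M[R]_k.+1) : M \in unitmx ->
  forall u : 'rV[R[i]]_k.+1,
  rc (sigma_min M ^+ 2) * dotmx (u *m cmx (invmx M)) (u *m cmx (invmx M)) <= dotmx u u.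
Proof.
move=> uM; have [sp sb] := M_bound uM.
set s := rc (sigma_min M ^+ 2).
have s0 : 0 < s by rewrite ltcR exprn_gt0.
have b1 v : s * dotmx (v *m cmx (invmx M)^T) (v *m cmx (invmx M)^T) <= dotmx v v.
  have := sb (v *m cmx (invmx M)^T).
  suff -> : v *m cmx (invmx M)^T *m cmx M^T = v by [].
  by rewrite -mulmxA !cmxE -map_mxM -trmx_mul mulmxV // trmx1 map_mx1 mulmx1.
move=> u; set y := u *m cmx (invmx M); set a := y *m cmx (invmx M)^T.
have ey : dotmx y y = dotmx a u.
  rewrite !dotmxE /a /y trmx_mul map_mxM adj_cmx !mulmxA //.
have [cs _] := CauchySchwarz (@dotmx _ k.+1) a u.
have cs' : `|dotmx a u| ^+ 2 <= dotmx a a * dotmx u u := cs.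
rewrite -ey ger0_norm ?dnorm_ge0 // in cs'.
have ny0 := dnorm_ge0 (@dotmx _ k.+1) y.
have nu0 := dnorm_ge0 (@dotmx _ k.+1) u.
have ba := b1 y; rewrite -/a in ba.
case: (eqVneq (dotmx y y) 0) => [->|nz]; first by rewrite mulr0.
have nyp : 0 < dotmx y y by rewrite lt_def nz ny0.
rewrite -(ler_pM2l nyp) mulrCA.
apply: (le_trans _ (ler_wpM2r nu0 ba)).
rewrite -mulrA; apply: ler_wpM2l; first exact: ltW.
by rewrite -expr2.
Qed.
Lemma norm_rc (R : realType) (x : R) : `|rc x| = rc `|x|.
Proof. by rewrite normc_def /= expr0n addr0 sqrtr_sqr. Qed.

Lemma tr_conj_unitary (C : numClosedFieldType) m (Q X : 'M[C]_m) :
  Q \is unitarymx -> \tr X = \tr (Q *m X *m adjm Q).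
Proof.
move=> uQ; rewrite mxtrace_mulC mulmxA -invmx_unitary //.
by rewrite mulVmx ?unitarymx_unit // mul1mx.
Qed.

Lemma trace_bound (R : realType) k (A M : 'M[R]_k.+1) : M \in unitmx ->
  `|\tr (A *m invmx M)| <= nuclear_norm A / sigma_min M.
Proof.
move=> uM; have [sp _] := M_bound uM; have Wb := W_bound uM.
set s := sigma_min M in sp Wb *.
have [Q [d [uQ eG pd dd]]] := spec_real A.
have ps := singvals_spec pd.
have nE : nuclear_norm A = \sum_i Num.sqrt (complex.Re (d 0 i)).
  by rewrite /nuclear_norm -(perm_big _ ps) big_map big_enum.
rewrite -lecR -norm_rc.
have -> : rc (\tr (A *m invmx M)) = \tr (cmx A *m invmx (cmx M)).
  by rewrite !cmxE -map_invmx -map_mxM trace_map_mx.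
rewrite mxtrace_mulC (tr_conj_unitary _ uQ) /mxtrace.
set Wc := invmx (cmx M).
have eW : Wc = cmx (invmx M) by rewrite /Wc !cmxE map_invmx.
under eq_bigr => j _ do rewrite -quad_row.
have ej j : (row j Q *m (Wc *m cmx A) *m adjm (row j Q)) 0 0
   = dotmx (row j Q *m Wc) (row j Q *m cmx A^T).
  by rewrite dotmxE trmx_mul map_mxM adj_cmx trmxK !mulmxA.
under eq_bigr => j _ do rewrite ej.
apply: (le_trans (ler_norm_sum _ _ _)).
rewrite nE mulr_suml rmorph_sum; apply: ler_sum => j _.
have [cs _] := CauchySchwarz_sqrt (@dotmx _ k.+1) (row j Q *m Wc) (row j Q *m cmx A^T).
apply: (le_trans cs).
rewrite mulrC rmorphM /=; apply: ler_pM.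
- exact: sqrt_dnorm_ge0.
- exact: sqrt_dnorm_ge0.
- have dj0 : 0 <= d 0 j by rewrite dd dnorm_ge0.
  have [de dp] := ge0_Cre dj0.
  have -> : rc (Num.sqrt (complex.Re (d 0 j))) = sqrtC (d 0 j) by rewrite {2}de sqrtC_rc.
  rewrite dd; exact: lexx.
- have q1 : dotmx (row j Q) (row j Q) = 1 by rewrite (row_unitarymxP uQ) eqxx.
  have := Wb (row j Q); rewrite q1 -eW => h.
  have hs : 0 < rc (s ^+ 2) by rewrite ltcR exprn_gt0.
  have h' : dotmx (row j Q *m Wc) (row j Q *m Wc) <= rc (s^-1) ^+ 2.
    rewrite -rmorphXn /= exprVn rmorphV ?unitfE ?expf_neq0 ?gt_eqF //=.
    by rewrite -[X in _ <= X]mul1r ler_pdivlMr // mulrC.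
  rewrite -(@sqrCK _ (rc s^-1)); last by rewrite ler0c invr_ge0 ltW.
  rewrite ler_sqrtC // nnegrE ?dnorm_ge0 //.
  by rewrite exprn_ge0 // ler0c invr_ge0 ltW.
Qed.
Lemma cvg_bound (R : realType) (u : nat -> R) (L C0 q : R) :
  0 <= q -> q < 1 -> (forall K, `|u K - L| <= C0 * q ^+ K) -> u @ \oo --> (L : R^o).
Proof.
move=> q0 q1 hb.
have hq : (fun K => C0 * q ^+ K) @ \oo --> (0 : R^o).
  rewrite -(mulr0 C0); apply: cvgMr; apply: cvg_expr.
  by rewrite ger0_norm.
have hL : (fun _ : nat => L) @ \oo --> (L : R^o) by apply: (@cvg_cst R^o L).
apply: (@squeeze_cvgr _ _ _ _ (fun K => L - C0 * q ^+ K) (fun K => L + C0 * q ^+ K)).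
- by near=> K; rewrite -ler_distl.
- have h := cvgB hL hq; rewrite subr0 in h; exact: h.
- have h := cvgD hL hq; rewrite addr0 in h; exact: h.
Unshelve. all: end_near.
Qed.
Lemma schur_real (R : realType) k (A : 'M[R]_k.+1) :
  exists P : 'M[R[i]]_k.+1, [/\ P \in unitmx, is_trig_mx (P *m cmx A *m invmx P) &
   perm_eq [seq (P *m cmx A *m invmx P) i i | i <- enum 'I_k.+1] (eigvals A)].
Proof.
have [P uP tP] := Schur (cmx A) (ltn0Sn k).
have uP' := unitarymx_unit uP.
have tP' : is_trig_mx (P *m cmx A *m invmx P) by rewrite -conjumx.
by exists P; split => //; apply: eig_perm.
Qed.

Lemma conj_exp (F : fieldType) k (P T : 'M[F]_k.+1) p : P \in unitmx ->
  (invmx P *m T *m P) ^+ p = invmx P *m T ^+ p *m P.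
Proof.
move=> uP; elim: p => [|p IH].
  by rewrite !expr0 mulmx1 mulVmx.
by rewrite !exprS IH -!mulmxE !mulmxA mulmxK.
Qed.

Lemma normC_normc (R : realType) (z : R[i]) : `|z| = rc (Normc.normc z).
Proof. by case: z => a b; rewrite normc_def. Qed.

Lemma eig_norm (R : realType) m (A : 'M[R]_m) z : z \in eigvals A ->
  `|z| <= rc (spectral_radius A).
Proof.
move=> zi; rewrite normC_normc lecR /spectral_radius.
exact: (le_bigmax_seq 0 z predT (fun z => Normc.normc z) zi isT).
Qed.

Lemma cmxX (R : realType) k (A : 'M[R]_k.+1) p : cmx (A ^+ p) = cmx A ^+ p.
Proof.
elim: p => [|p IH]; first by rewrite !expr0 cmxE map_mx1.
rewrite !exprS -!mulmxE cmxE map_mxM -!cmxE; congr (_ *m _); exact: IH.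
Qed.

Lemma tr_pow (R : realType) k (A : 'M[R]_k.+1) (P : 'M[R[i]]_k.+1) p :
  P \in unitmx -> is_trig_mx (P *m cmx A *m invmx P) ->
  rc (\tr (A ^+ p)) = \sum_i ((P *m cmx A *m invmx P) i i) ^+ p.
Proof.
move=> uP tT; set T := P *m cmx A *m invmx P.
have eA : cmx A = invmx P *m T *m P.
  by rewrite /T !mulmxA mulVmx // mul1mx mulmxKV.
rewrite -trace_map_mx -cmxE cmxX eA conj_exp // mxtrace_mulC mulmxA mulmxV // mul1mx.
rewrite /mxtrace; apply: eq_bigr => i _.
by have [_ ->] := trig_exp p tT.
Qed.
Lemma inv_eq (F : fieldType) m (X Y : 'M[F]_m) : X \in unitmx -> X *m Y = 1%:M -> invmx X = Y.
Proof. by move=> uX XY; rewrite -[Y](mulKmx uX) XY mulmx1. Qed.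

Lemma tr_inv (R : realType) k (A : 'M[R]_k.+1) (P : 'M[R[i]]_k.+1) (c : R) :
  P \in unitmx -> is_trig_mx (P *m cmx A *m invmx P) ->
  (forall i, (P *m cmx A *m invmx P) i i != rc c) ->
  (c%:M - A) \in unitmx /\ rc (\tr (A *m invmx (c%:M - A))) =
    \sum_i (P *m cmx A *m invmx P) i i / (rc c - (P *m cmx A *m invmx P) i i).
Proof.
move=> uP tT neT; set T := P *m cmx A *m invmx P in tT neT *.
set U := (rc c)%:M - T.
have eA : cmx A = invmx P *m T *m P.
  by rewrite /T !mulmxA mulVmx // mul1mx mulmxKV.
have eM : cmx (c%:M - A) = invmx P *m U *m P.
  rewrite cmxE map_mxB map_scalar_mx -cmxE eA /U mulmxBr mulmxBl; congr (_ - _).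
  by rewrite scalar_mxC -mulmxA mulVmx // mulmx1.
have tU : is_trig_mx U.
  apply/is_trig_mxP => i j lij.
  have -> : U i j = (rc c)%:M i j - T i j by rewrite /U [in LHS]mxE [(- T) i j]mxE.
  rewrite (is_trig_mxP tT) // mxE.
  by rewrite -val_eqE /= (ltn_eqF lij) mulr0n subr0.
have dUe i : U i i = rc c - T i i.
  by rewrite /U [in LHS]mxE [(- T) i i]mxE [(rc c)%:M i i]mxE eqxx mulr1n.
have dU i : U i i != 0 by rewrite dUe subr_eq0 eq_sym.
have uU : U \in unitmx.
  by rewrite unitmxE det_trig // unitfE; apply/prodf_neq0 => i _.
have uMc : cmx (c%:M - A) \in unitmx by rewrite eM !unitmx_mul uU unitmx_inv uP.
have uM : (c%:M - A) \in unitmx by move: uMc; rewrite cmxE map_unitmx.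
split => //.
set V := invmx U.
have eI : invmx (cmx (c%:M - A)) = invmx P *m V *m P.
  apply: inv_eq => //; rewrite eM !mulmxA mulmxK // -(mulmxA (invmx P)) mulmxV //.
  by rewrite mulmx1 mulVmx.
rewrite -trace_map_mx map_mxM map_invmx -!cmxE eI !mulmxA mxtrace_mulC !mulmxA -/T.
have VU : V *m U = 1%:M by rewrite mulVmx.
have tV := trig_inv tU dU VU.
rewrite /mxtrace; apply: eq_bigr => i _.
rewrite trig_mulmx_diag // -dUe; congr (_ * _).
have := trig_mulmx_diag i tV tU; rewrite VU mxE eqxx mulr1n => h.
by apply: (mulIf (dU i)); rewrite mulVf // -h.
Qed.
Lemma geo_id (F : fieldType) (r : F) K : 1 - r != 0 ->
  \sum_(0 <= k < K) r ^+ k.+1 - r / (1 - r) = - (r ^+ K.+1 / (1 - r)).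
Proof.
move=> r1.
have h : (\sum_(0 <= k < K) r ^+ k.+1) * (1 - r) = r - r ^+ K.+1.
  elim: K => [|K IH]; first by rewrite big_nil mul0r expr1 subrr.
  by rewrite big_nat_recr //= mulrDl IH mulrBr mulr1 -exprSr; ring.
apply: (mulIf r1); rewrite mulrBl h mulNr !divfK //; ring.
Qed.

Lemma geo_bound (C : numFieldType) (r q : C) K : `|r| <= q -> q < 1 ->
  `|\sum_(0 <= k < K) r ^+ k.+1 - r / (1 - r)| <= q ^+ K.+1 / (1 - q).
Proof.
move=> rq q1.
have q0 : 0 <= q := le_trans (normr_ge0 r) rq.
have d0 : 0 < 1 - q by rewrite subr_gt0.
have dle : 1 - q <= `|1 - r|.
  apply: le_trans (lerB_dist _ _); rewrite normr1 lerD2l lerN2 //.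
have r1 : 1 - r != 0.
  by rewrite -normr_gt0; apply: lt_le_trans dle.
rewrite geo_id // normrN normrM normfV normrX.
apply: ler_pM.
- by rewrite exprn_ge0.
- by rewrite invr_ge0.
- by rewrite lerXn2r // ?nnegrE.
- by rewrite lef_pV2 // ?posrE // (lt_le_trans d0 dle).
Qed.
Lemma rep_term_C (R : realType) n (B : 'M[R]_n.+1) (P : 'M[R[i]]_n.+1) p :
  P \in unitmx -> is_trig_mx (P *m cmx (B ^+ 2) *m invmx P) ->
  rc (rep_term B p) =
  \sum_i ((P *m cmx (B ^+ 2) *m invmx P) i i / rc (zeta B * n.+1%:R)) ^+ p.
Proof.
move=> uP tT; rewrite /rep_term exprM -exprMn fmorph_div /= (tr_pow _ uP tT).
rewrite mulr_suml; apply: eq_bigr => i _.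
by rewrite rmorphXn /= -exprVn -exprMn.
Qed.

Lemma frac_id (F : fieldType) (t c : F) : c != 0 -> c - t != 0 ->
  t / (c - t) = (t / c) / (1 - t / c).
Proof. by move=> c0 ct; field; rewrite ct c0. Qed.
Unset Implicit Arguments.
Theorem theorem1 (R : realType) (n : nat) (B : 'M[R]_n.+1)
  (Bge0 : forall i j, 0 <= B i j)
  (Brow : forall i, \sum_j B i j <= 1)
  (Hrho : spectral_radius (B ^+ 2) < zeta B * n.+1%:R) :
  let M := zeta B * n.+1%:R *: 1%:M - B ^+ 2 in
  ([series rep_term B k.+1]_k @ \oo --> \tr (B ^+ 2 *m invmx M)) /\
  \tr (B ^+ 2 *m invmx M) <= nuclear_norm (B ^+ 2) / sigma_min M.
Proof.
move=> M.
have [P [uP tT pT]] := schur_real (B ^+ 2).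
have rtE p := rep_term_C p uP tT.
move: Hrho rtE.
rewrite /M scalemx1.
move: tT pT.
set c := zeta B * n.+1%:R.
set A := B ^+ 2.
set T := P *m cmx A *m invmx P.
move=> tT pT Hrho rtE.
have tin i : T i i \in eigvals A by rewrite -(perm_mem pT); apply: map_f; rewrite mem_enum.
have tn i : `|T i i| <= rc (spectral_radius A) := eig_norm (tin i).
have rho0 : 0 <= spectral_radius A.
  by rewrite -ler0c; exact: le_trans (normr_ge0 _) (tn ord0).
have c0 : 0 < c := le_lt_trans rho0 Hrho.
have neT i : T i i != rc c.
  apply/eqP => e; have h := tn i; rewrite e norm_rc (ger0_norm (ltW c0)) lecR in h.
  by move: Hrho; rewrite ltNge h.
have [uM trE] := tr_inv uP tT neT.
split; last first.
  exact: le_trans (real_ler_norm (num_real _)) (trace_bound A uM).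
set L := \tr (A *m invmx (c%:M - A)).
set q := spectral_radius A / c.
have q0 : 0 <= q by rewrite divr_ge0 // ltW.
have q1 : q < 1 by rewrite ltr_pdivrMr // mul1r.
have cc0 : rc c != 0 by rewrite -(rmorph0 (real_complex R)) (inj_eq (@complexI R)) gt_eqF.
apply: (cvg_bound (C0 := n.+1%:R * q / (1 - q)) q0 q1) => K.
rewrite -lecR -norm_rc rmorphB /= /series /=.
have eS : rc (\sum_(0 <= k < K) rep_term B k.+1) =
    \sum_(0 <= k < K) \sum_i (T i i / rc c) ^+ k.+1.
  by rewrite rmorph_sum; apply: eq_bigr => k _; exact: rtE.
rewrite eS exchange_big /= trE -sumrB -/T.
have ctn i : rc c - T i i != 0 by rewrite subr_eq0 eq_sym.
under eq_bigr => i _ do rewrite (frac_id cc0 (ctn i)).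
apply: le_trans (ler_norm_sum _ _ _) _.
have hr i : `|T i i / rc c| <= rc q.
  rewrite normrM normfV norm_rc (ger0_norm (ltW c0)) /q fmorph_div /=.
  by apply: ler_wpM2r; [rewrite invr_ge0 ler0c ltW | exact: tn].
have hq1 : rc q < 1 by rewrite -(rmorph1 (real_complex R)) ltcR.
clearbody q.
apply: le_trans (ler_sum _ (fun i _ => geo_bound K (hr i) hq1)) _.
rewrite sumr_const card_ord.
have q10 : 1 - q != 0 by rewrite subr_eq0 eq_sym lt_eqF.
have e : n.+1%:R * q / (1 - q) * q ^+ K = q ^+ K.+1 / (1 - q) *+ n.+1.
  by rewrite -mulr_natl exprS; field.
rewrite e rmorphMn fmorph_div rmorphXn rmorphB rmorph1.
exact: lexx.
Qed.
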